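(* Let $T=(t_{ij})$ be an $\mathbb{N}$-tableau of shape $\lambda$ and let $\widehat{T}$ be its image under the toggle map defined in the context. Then \[|\widehat{T}|=\sum_{(i,j)\in\lambda}t_{ij}\,h_{\lambda}(i,j).\]
   Context: Partitions are drawn in English notation with matrix coordinates: the box in row $i$ and column $j$ is $(i,j)$. An $\mathbb{N}$-tableau of shape $\lambda$ is an assignment of a nonnegative integer to each box of $\lambda$; its weight $|T|$ is the sum of its entries. The hook $H_\lambda(i,j)$ is the set of boxes $(i,j')\in\lambda$ with $j'\ge j$ together with the boxes $(i',j)\in\lambda$ with $i'\ge i$, and $h_\lambda(i,j)=|H_\lambda(i,j)|$. A corner box is a box $(i,j)$ such that neither $(i+1,j)$ nor $(i,j+1)$ is a box. The toggle map $T\mapsto\widehat{T}$ is defined recursively: $\widehat{\emptyset}=\emptyset$; if $T'$ is obtained from $T$ by adding a corner box $(i,j)$ (of $\mathrm{sh}(T')$) with entry $x$, then $\widehat{T'}$ is obtained from $\widehat{T}$ as follows. For $k\ge1$ let $\beta_k,\gamma_k,\alpha_k$ be the entries of $\widehat{T}$ at $(i-k,j-k)$, $(i-k+1,j-k)$, $(i-k,j-k+1)$ respectively (taken to be $0$ if the box is not in $\mathrm{sh}(T)$). Then $\widehat{T'}$ agrees with $\widehat{T}$ except that for $1\le k<\min(i,j)$ the entry at $(i-k,j-k)$ becomes $\max(\alpha_{k+1},\gamma_{k+1})+\min(\alpha_k,\gamma_k)-\beta_k$, and the entry at $(i,j)$ is $\max(\alpha_1,\gamma_1)+x$. This is independent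 of the order in which boxes are added. *)

(* Defs.v *)
From mathcomp Require Import all_boot all_order all_algebra.
Set Implicit Arguments. Unset Strict Implicit. Unset Printing Implicit Defensive.
Import Order.TTheory GRing.Theory Num.Theory.

(* Partitions: weakly decreasing lists of positive parts (row lengths).
   Boxes use 1-based matrix coordinates (i, j). *)
Definition is_partition (la : seq nat) : bool :=
  sorted geq la && all (fun x => 0 < x) la.

Definition boxes (la : seq nat) : seq (nat * nat) :=
  flatten [seq [seq (i.+1, j.+1) | j <- iota 0 (nth 0 la i)] | i <- iota 0 (size la)].

Definition hook (la : seq nat) (i j : nat) : nat :=
  count (fun b : nat * nat => ((b.1 == i) && (j <= b.2)) || ((b.2 == j) && (i <= b.1)))
        (boxes la).

(* N-tableaux are functions nat -> nat -> nat (only values on boxes matter);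
   toggled tableaux are int-valued (the toggle formula involves a subtraction). *)

Local Open Scope ring_scope.

(* One step: S = boxes of sh(T) (the old shape), F = \hat T, adding corner (i,j)
   with entry x. Entries outside S are read as 0. *)
Definition toggle_step (S : seq (nat * nat)) (F : nat -> nat -> int)
    (i j : nat) (x : nat) : nat -> nat -> int :=
  let G a b := if (a, b) \in S then F a b else 0 in
  fun a b =>
    if (a == i) && (b == j) then Num.max (G i.-1 j) (G i j.-1) + x%:Z
    else if [&& (1 <= a)%N, (a < i)%N, (1 <= b)%N & (b + (i - a))%N == j] then
      (* a = i-k, b = j-k with 1 <= k < min(i,j) *)
      Num.max (G a.-1 b) (G a b.-1) + Num.min (G a b.+1) (G a.+1 b) - G a b
    else F a b.

(* The toggle map, computed by adding the boxes of la row by row, left to right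
   (each added box is a corner of the new shape; the result is independent of
   the order by the paper). *)
Definition toggle (la : seq nat) (T : nat -> nat -> nat) : nat -> nat -> int :=
  (foldl (fun (st : seq (nat * nat) * (nat -> nat -> int)) (b : nat * nat) =>
            (rcons st.1 b, toggle_step st.1 st.2 b.1 b.2 (T b.1 b.2)))
         ([::], fun _ _ => 0) (boxes la)).2.

Definition weightZ (la : seq nat) (F : nat -> nat -> int) : int :=
  \sum_(b <- boxes la) F b.1 b.2.

(* Main.v *)
Require Import Defs.
From mathcomp Require Import all_boot all_order all_algebra.
From mathcomp Require Import zify.
From Stdlib Require Import FunctionalExtensionality.
Import GRing.Theory Num.Theory.
Set Implicit Arguments. Unset Strict Implicit. Unset Printing Implicit Defensive.

Definition lexlt (x y : nat * nat) : bool :=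
  (x.1 < y.1)%N || ((x.1 == y.1) && (x.2 < y.2)%N).

Definition rows (la : seq nat) (k n : nat) : seq (nat * nat) :=
  flatten [seq [seq (i.+1, j.+1) | j <- iota 0 (nth 0 la i)] | i <- iota k n].

Lemma mem_rows la k n a b :
  ((a, b) \in rows la k n) = [&& (k < a)%N, (a <= k + n)%N, (0 < b)%N & (b <= nth 0 la a.-1)%N].
Proof.
apply/idP/idP.
  case/flatten_mapP => i; rewrite mem_iota => /andP[H1 H2] /mapP[j].
  rewrite mem_iota => /andP[_ H3] [-> ->] /=. by repeat (apply/andP; split); lia.
case/and4P => H1 H2 H3 H4. apply/flatten_mapP; exists a.-1.
  rewrite mem_iota; lia.
apply/mapP; exists b.-1; first by rewrite mem_iota; lia.
congr pair; lia.
Qed.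

Lemma mem_boxes la a b :
  ((a, b) \in boxes la) = [&& (0 < a)%N, (a <= size la)%N, (0 < b)%N & (b <= nth 0 la a.-1)%N].
Proof. exact: (mem_rows la 0 (size la) a b). Qed.

Lemma rows_pairwise la k n : pairwise lexlt (rows la k n).
Proof.
elim: n k => [|n IH] k //=.
rewrite /rows /= pairwise_cat -/(rows la k.+1 n) IH andbT.
apply/andP; split.
  apply/allrelP => x y /mapP[j _ ->] Hy.
  case: y Hy => a b; rewrite mem_rows => /and4P[H1 _ _ _].
  rewrite /lexlt /=; apply/orP; left; lia.
rewrite pairwise_map.
have := iota_ltn_sorted 0 (nth 0 la k).
rewrite sorted_pairwise; last by move=> ? ? ?; apply: ltn_trans.
apply: sub_pairwise => x y /= H; rewrite /lexlt /=; apply/orP; right; lia.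
Qed.

Lemma boxes_pairwise la : pairwise lexlt (boxes la).
Proof. exact: rows_pairwise. Qed.

Lemma lexlt_irr : irreflexive lexlt.
Proof. move=> [a b]; rewrite /lexlt /=; lia. Qed.

Lemma big_supp (R : Type) (idx : R) (op : Monoid.com_law idx) (T : eqType)
  (s r : seq T) (H : T -> R) :
  uniq s -> uniq r ->
  (forall x, x \in s -> x \notin r -> H x = idx) ->
  (forall x, x \in r -> x \notin s -> H x = idx) ->
  \big[op/idx]_(x <- s) H x = \big[op/idx]_(x <- r) H x.
Proof.
move=> us ur hs hr.
have e1 : \big[op/idx]_(x <- s) H x = \big[op/idx]_(x <- s | x \in r) H x.
  rewrite [RHS]big_mkcond /=; apply: eq_big_seq => x xs.
  by case: ifP => // /negbT; apply: hs.
have e2 : \big[op/idx]_(x <- r) H x = \big[op/idx]_(x <- r | x \in s) H x.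
  rewrite [RHS]big_mkcond /=; apply: eq_big_seq => x xs.
  by case: ifP => // /negbT; apply: hr.
rewrite e1 e2 -[LHS]big_filter -[RHS]big_filter; apply: perm_big; apply: uniq_perm.
- exact: filter_uniq.
- exact: filter_uniq.
by move=> x; rewrite !mem_filter andbC.
Qed.

Ltac gen_sums :=
  repeat match goal with
  | H : context [@bigop.body _ _ _ _ _] |- _ => revert H
  end;
  repeat match goal with
  | |- context [@bigop.body ?R ?I ?idx ?r ?f] =>
      let s := fresh "s" in set s := @bigop.body R I idx r f; clearbody s
  end.
Ltac slia := gen_sums; lia.

Local Open Scope ring_scope.

Definition Dg (F : nat -> nat -> int) (p q : nat) : int :=
  \sum_(0 <= k < minn p q) F (p - k)%N (q - k)%N.

Definition Rs (T : nat -> nat -> nat) (p q : nat) : int :=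
  \sum_(0 <= a < p) \sum_(0 <= b < q) (T a.+1 b.+1)%:Z.

Lemma Dg_ext F p q n : (forall b, F 0%N b = 0) -> (forall a, F a 0%N = 0) ->
  (minn p q <= n)%N -> Dg F p q = \sum_(0 <= k < n) F (p - k)%N (q - k)%N.
Proof.
move=> h0 h1 hn; rewrite /Dg (big_cat_nat (leq0n _) hn) /=.
suff -> : \sum_(minn p q <= k < n) F (p - k)%N (q - k)%N = 0 by rewrite addr0.
rewrite big_nat_cond big1 // => k /andP[/andP[hk _] _].
case: (leqP p q) => hpq.
  have -> : (p - k = 0)%N by lia. by rewrite h0.
have -> : (q - k = 0)%N by lia. by rewrite h1.
Qed.

Lemma Dg0 F p q : (p = 0 \/ q = 0)%N -> Dg F p q = 0.
Proof. by move=> [->|->]; rewrite /Dg ?min0n ?minn0 big_geq. Qed.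

Lemma Rs0 T p q : (p = 0 \/ q = 0)%N -> Rs T p q = 0.
Proof.
move=> [->|->]; rewrite /Rs; first by rewrite big_geq.
by rewrite big1 // => a _; rewrite big_geq.
Qed.

Lemma telesc (P Q B : nat -> int) n :
  \sum_(0 <= k < n) (Num.max (P k.+1) (Q k.+1) + Num.min (P k) (Q k) - B k) =
  \sum_(0 <= k < n) P k + \sum_(0 <= k < n) Q k - \sum_(0 <= k < n) B k
  + Num.max (P n) (Q n) - Num.max (P 0%N) (Q 0%N).
Proof.
elim: n => [|n IH]; first rewrite !big_geq //. lia.
rewrite !big_nat_recr //= IH. have := addr_min_max (P n) (Q n). slia.
Qed.

Lemma Rs_col T i j : Rs T i j.+1 = Rs T i j + \sum_(0 <= a < i) (T a.+1 j.+1)%:Z.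
Proof.
rewrite /Rs -big_split /=; apply: eq_bigr => a _; by rewrite big_nat_recr.
Qed.

Lemma Rs_row T i j : Rs T i.+1 j = Rs T i j + \sum_(0 <= b < j) (T i.+1 b.+1)%:Z.
Proof. by rewrite /Rs big_nat_recr. Qed.

Lemma Rs_rec T i j : Rs T i.+1 j.+1 = (T i.+1 j.+1)%:Z + Rs T i j.+1 + Rs T i.+1 j - Rs T i j.
Proof.
rewrite Rs_row Rs_col Rs_row big_nat_recr //=. slia.
Qed.

Local Open Scope ring_scope.

Definition hookS (S : seq (nat * nat)) (i j : nat) : nat :=
  count (fun b : nat * nat => ((b.1 == i) && (j <= b.2)%N) || ((b.2 == j) && (i <= b.1)%N)) S.

Definition dg (i j a b : nat) : bool :=
  [&& (1 <= a)%N, (a < i)%N, (1 <= b)%N & (b + (i - a))%N == j].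

Definition Nv (F : nat -> nat -> int) (a b : nat) : int :=
  Num.max (F a.-1 b) (F a b.-1) + Num.min (F a b.+1) (F a.+1 b) - F a b.

Definition Fp (F : nat -> nat -> int) (i j x : nat) (a b : nat) : int :=
  if (a == i) && (b == j) then Num.max (F i.-1 j) (F i j.-1) + x%:Z
  else if dg i j a b then Nv F a b else F a b.

Lemma toggle_step_Fp S F i j x : (forall a b, (a, b) \notin S -> F a b = 0) ->
  toggle_step S F i j x = Fp F i j x.
Proof.
move=> Z; apply: functional_extensionality => a; apply: functional_extensionality => b.
have G : forall a b, (if (a, b) \in S then F a b else 0) = F a b.
  by move=> a' b'; case: ifP => // /negbT /Z ->.
by rewrite /toggle_step /Fp /Nv /dg /= !G.
Qed.

Definition Inv (T : nat -> nat -> nat) (S : seq (nat * nat)) (F : nat -> nat -> int) : Prop :=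
  [/\ (forall a b, (a, b) \notin S -> F a b = 0),
      (forall a b, 0 <= F a b),
      (forall a b, (a, b) \in S -> F a.-1 b <= F a b /\ F a b.-1 <= F a b),
      (forall p q, (p, q) \in S -> (p.+1, q.+1) \notin S -> Dg F p q = Rs T p q) &
      \sum_(x <- S) F x.1 x.2 = \sum_(x <- S) ((T x.1 x.2 * hookS S x.1 x.2)%N)%:Z ].

Definition shp (S : seq (nat * nat)) (i j : nat) : Prop :=
  [/\ uniq S /\ (i, j) \notin S,
      (forall a b, (a, b) \in S -> (0 < a)%N /\ (0 < b)%N),
      (forall a b a' b', (a, b) \in S -> (0 < a')%N -> (a' <= a)%N -> (0 < b')%N ->
          (b' <= b)%N -> (a', b') \in S),
      ((1 < i)%N -> (i.-1, j) \in S) &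
      ((1 < j)%N -> (i, j.-1) \in S)].

Section Facts.
End Facts.

Lemma inS_rect S i j : shp S i.+1 j.+1 ->
  forall a b, (0 < a)%N -> (a <= i)%N -> (0 < b)%N -> (b <= j.+1)%N -> (a, b) \in S.
Proof.
move=> [_ _ h2 h3 _] a b ha1 ha2 hb1 hb2; have hi : (1 < i.+1)%N by lia.
apply: (h2 i j.+1 a b (h3 hi)); lia.
Qed.

Lemma inS_row S i j : shp S i.+1 j.+1 ->
  forall b, (0 < b)%N -> (b <= j)%N -> (i.+1, b) \in S.
Proof.
move=> [_ _ h2 _ h3] b hb1 hb2; have hj : (1 < j.+1)%N by lia.
apply: (h2 i.+1 j i.+1 b (h3 hj)); lia.
Qed.

Lemma notS_ge S i j : shp S i.+1 j.+1 ->
  forall a b, (i.+1 <= a)%N -> (j.+1 <= b)%N -> (a, b) \notin S.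
Proof.
move=> [[_ ny] h1 h2 _ _] a b ha hb; apply/negP => ab.
suff : (i.+1, j.+1) \in S by rewrite (negbTE ny).
apply: (h2 a b); try done; lia.
Qed.

Lemma inS'_rect S i j : shp S i.+1 j.+1 ->
  forall a b, (0 < a)%N -> (a <= i.+1)%N -> (0 < b)%N -> (b <= j.+1)%N ->
  (a = i.+1 -> b <= j.+1)%N -> (a, b) \in rcons S (i.+1, j.+1).
Proof.
move=> sh a b ha1 ha2 hb1 hb2 _; rewrite mem_rcons in_cons.
case: (ltnP a i.+1) => h.
  by rewrite (inS_rect sh) ?orbT //; lia.
case: (ltnP b j.+1) => h'.
  have -> : a = i.+1 by lia. by rewrite (inS_row sh) ?orbT //; lia.
by apply/orP; left; apply/eqP; congr pair; lia.
Qed.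

Local Open Scope ring_scope.

Lemma step_inv T S F i j : shp S i.+1 j.+1 -> Inv T S F ->
  Inv T (rcons S (i.+1, j.+1)) (Fp F i.+1 j.+1 (T i.+1 j.+1)).
Proof.
move=> sh [Z NN RP DI W].
have [[uS nSy] h1 _ _ _] := sh.
have rect := inS_rect sh. have row := inS_row sh. have nge := notS_ge sh.
have rect' := inS'_rect sh.
have F0b : forall b, F 0%N b = 0.
  by move=> b; apply: Z; apply/negP => /h1 [] /=; lia.
have Fa0 : forall a, F a 0%N = 0.
  by move=> a; apply: Z; apply/negP => /h1 [] /=; lia.
set G := Fp F i.+1 j.+1 (T i.+1 j.+1).
have GE_y : G i.+1 j.+1 = Num.max (F i j.+1) (F i.+1 j) + (T i.+1 j.+1)%:Z.
  by rewrite /G /Fp !eqxx.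
have GE_d : forall a b, dg i.+1 j.+1 a b -> G a b = Nv F a b.
  move=> a b hd; rewrite /G /Fp hd /=; case: ifP => // /andP[/eqP ea /eqP eb].
  by move: hd; rewrite /dg ea eb; lia.
have GE_o : forall a b, ~~ ((a == i.+1) && (b == j.+1)) -> ~~ dg i.+1 j.+1 a b -> G a b = F a b.
  by move=> a b h h'; rewrite /G /Fp (negbTE h) (negbTE h').
have DF : forall a b, dg i.+1 j.+1 a b -> [/\ (a, b) \in S, F a b <= F a b.+1,
    F a b <= F a.+1 b, F a.-1 b <= F a b & F a b.-1 <= F a b].
  move=> a b /and4P[ha1 ha2 hb1 /eqP hb2].
  have aS : (a, b) \in S by apply: rect; lia.
  have [r1 r2] := RP a b aS.
  have aS1 : (a, b.+1) \in S by apply: rect; lia.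
  have aS2 : (a.+1, b) \in S.
    case: (ltnP a i) => h; first by apply: rect; lia.
    have -> : a.+1 = i.+1 by lia.
    by apply: row; lia.
  have [_ r3] := RP _ _ aS1. have [r4 _] := RP _ _ aS2.
  by split.
set m := minn i j.
pose P k := F (i - k)%N (j.+1 - k)%N.
pose Q k := F (i.+1 - k)%N (j - k)%N.
pose B k := F (i - k)%N (j - k)%N.
have Ek : forall k, (k < m)%N -> G (i - k)%N (j - k)%N =
    Num.max (P k.+1) (Q k.+1) + Num.min (P k) (Q k) - B k.
  move=> k hk; rewrite (GE_d (i - k)%N (j - k)%N); last by rewrite /dg; lia.
  rewrite /Nv /P /Q /B.
  have -> : (i - k).-1 = (i - k.+1)%N by lia.
  have -> : (j.+1 - k.+1)%N = (j - k)%N by lia.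
  have -> : (i.+1 - k.+1)%N = (i - k)%N by lia.
  have -> : (j - k).-1 = (j - k.+1)%N by lia.
  have -> : (j - k).+1 = (j.+1 - k)%N by lia.
  have -> : (i - k).+1 = (i.+1 - k)%N by lia.
  by [].
have EG : Dg G i.+1 j.+1 = G i.+1 j.+1 + \sum_(0 <= k < m) G (i - k)%N (j - k)%N.
  rewrite /Dg (_ : minn i.+1 j.+1 = m.+1); last by rewrite /m; lia.
  rewrite big_nat_recl // !subn0; congr (_ + _).
have ES : \sum_(0 <= k < m) G (i - k)%N (j - k)%N =
    \sum_(0 <= k < m) P k + \sum_(0 <= k < m) Q k - \sum_(0 <= k < m) B k
    + Num.max (P m) (Q m) - Num.max (P 0%N) (Q 0%N).
  rewrite -telesc; apply: eq_big_nat => k /andP[_ hk]; exact: Ek.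
have EP : Dg F i j.+1 = \sum_(0 <= k < m) P k + P m.
  by rewrite (@Dg_ext _ _ _ m.+1) //; [rewrite big_nat_recr | rewrite /m; lia].
have EQ : Dg F i.+1 j = \sum_(0 <= k < m) Q k + Q m.
  by rewrite (@Dg_ext _ _ _ m.+1) //; [rewrite big_nat_recr | rewrite /m; lia].
have EB : Dg F i j = \sum_(0 <= k < m) B k by [].
have Em : Num.max (P m) (Q m) = P m + Q m.
  rewrite /P /Q; case: (leqP i j) => h.
    have -> : (i - m = 0)%N by rewrite /m; lia.
    by rewrite F0b; have := NN (i.+1 - m)%N (j - m)%N; lia.
  have -> : (j - m = 0)%N by rewrite /m; lia.
  by rewrite Fa0; have := NN (i - m)%N (j.+1 - m)%N; lia.
have E0 : Num.max (P 0%N) (Q 0%N) = Num.max (F i j.+1) (F i.+1 j) by rewrite /P /Q !subn0.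
have EDG : Dg G i.+1 j.+1 = (T i.+1 j.+1)%:Z + Dg F i j.+1 + Dg F i.+1 j - Dg F i j.
  rewrite EG ES EP EQ EB Em E0 GE_y; slia.
have DIx : forall p q, ((p = 0)%N \/ (q = 0)%N \/ ((p, q) \in S /\ (p.+1, q.+1) \notin S)) ->
    Dg F p q = Rs T p q.
  move=> p q [h|[h|[h h']]]; try by rewrite Dg0 ?Rs0; auto.
  exact: DI.
have D1 : Dg F i j.+1 = Rs T i j.+1.
  apply: DIx; case: (posnP i) => hi; first by left.
  by right; right; split; [apply: rect; lia | apply: nge; lia].
have D2 : Dg F i.+1 j = Rs T i.+1 j.
  apply: DIx; case: (posnP j) => hj; first by right; left.
  by right; right; split; [apply: row; lia | apply: nge; lia].
have D3 : Dg F i j = Rs T i j.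
  apply: DIx; case: (posnP i) => hi; first by left.
  case: (posnP j) => hj; first by right; left.
  by right; right; split; [apply: rect; lia | exact: nSy].
have DY : Dg G i.+1 j.+1 = Rs T i.+1 j.+1 by rewrite EDG D1 D2 D3 Rs_rec.
split.
-
  move=> a b; rewrite mem_rcons in_cons negb_or => /andP[ne nS].
  case: (boolP (dg i.+1 j.+1 a b)) => hd.
    by have [aS _ _ _ _] := DF a b hd; rewrite aS in nS.
  have ne' : ~~ ((a == i.+1) && (b == j.+1)) by move: ne; rewrite xpair_eqE.
  by rewrite GE_o //; exact: Z.
-
  move=> a b.
  case: (boolP ((a == i.+1) && (b == j.+1))) => [/andP[/eqP -> /eqP ->]| ne].
    by rewrite GE_y; have := NN i j.+1; lia.
  case: (boolP (dg i.+1 j.+1 a b)) => hd.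
    rewrite GE_d //; have [_ d1 d2 d3 d4] := DF a b hd; rewrite /Nv.
    by have := NN a.-1 b; lia.
  by rewrite GE_o.
-
  have key : forall a b a' b', (a, b) \in S -> ((a' = a.-1 /\ b' = b) \/ (a' = a /\ b' = b.-1))%N ->
      G a' b' <= F a b.
    move=> a b a' b' aS hab.
    have [a0 b0] := h1 a b aS.
    have [r1 r2] := RP a b aS.
    case: (boolP ((a' == i.+1) && (b' == j.+1))) => [/andP[/eqP ea /eqP eb]| ne].
      exfalso; move: aS; apply/negP; apply: nge; lia.
    case: (boolP (dg i.+1 j.+1 a' b')) => hd; last first.
      by rewrite GE_o //; case: hab => [[-> ->]|[-> ->]].
    rewrite (GE_d a' b') // /Nv. have [_ d1 d2 d3 d4] := DF a' b' hd.
    case: hab => [[ea eb]|[ea eb]].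
      have e : a'.+1 = a by lia.
      rewrite e eb in d2 *; rewrite eb in d1 d3 d4; lia.
    have e : b'.+1 = b by lia.
    rewrite e ea in d1 *; rewrite ea in d2 d3 d4; lia.
  move=> a b; rewrite mem_rcons in_cons => /orP[/eqP [-> ->] | aS].
    have n1 : ~~ ((i == i.+1) && (j.+1 == j.+1)) by lia.
    have n2 : ~~ dg i.+1 j.+1 i j.+1 by rewrite /dg; lia.
    have n3 : ~~ ((i.+1 == i.+1) && (j == j.+1)) by lia.
    have n4 : ~~ dg i.+1 j.+1 i.+1 j by rewrite /dg; lia.
    rewrite /= GE_y GE_o // (GE_o i.+1 j) //.
    by have := NN i j.+1; lia.
  case: (boolP (dg i.+1 j.+1 a b)) => hd.
    rewrite (GE_d a b) // /Nv.
    have [_ d1 d2 d3 d4] := DF a b hd.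
    have n1 : ~~ ((a.-1 == i.+1) && (b == j.+1)) by move: hd; rewrite /dg; lia.
    have n2 : ~~ dg i.+1 j.+1 a.-1 b by move: hd; rewrite /dg; lia.
    have n3 : ~~ ((a == i.+1) && (b.-1 == j.+1)) by move: hd; rewrite /dg; lia.
    have n4 : ~~ dg i.+1 j.+1 a b.-1 by move: hd; rewrite /dg; lia.
    rewrite (GE_o a.-1 b) // (GE_o a b.-1) //; lia.
  have ne : ~~ ((a == i.+1) && (b == j.+1)).
    by apply/negP => /andP[/eqP ea /eqP eb]; move: nSy; rewrite -ea -eb aS.
  rewrite (GE_o a b) //; split; apply: (key a b) => //; by [left | right].
-
  move=> p q; rewrite mem_rcons in_cons => /orP[/eqP [-> ->] | pS] nS'; first exact: DY.
  have nS : (p.+1, q.+1) \notin S by move: nS'; rewrite mem_rcons in_cons negb_or => /andP[].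
  rewrite -(DI p q pS nS) /Dg; apply: eq_big_nat => k /andP[_ hk].
  have [p0 q0] := h1 p q pS.
  case: (ltnP p i.+1) => hp; last first.
    case: (ltnP q j.+1) => hq; last by have := nge p q hp hq; rewrite pS.
    apply: GE_o; apply/negP; [move=> /andP[/eqP e1 /eqP e2]; lia | rewrite /dg; lia].
  apply: GE_o; apply/negP.
    move=> /andP[/eqP e1 /eqP e2]; lia.
  move=> hd; move: nS'; apply/negP/negPn; apply: rect'; move: hd; rewrite /dg; lia.
-
  have hk : forall a b, hookS (S ++ [:: (i.+1, j.+1)]) a b =
      (hookS S a b + (((i.+1 == a) && (b <= j.+1)) || ((j.+1 == b) && (a <= i.+1))))%N.
    by move=> a b; rewrite /hookS count_cat /= addn0.
  have hy : hookS S i.+1 j.+1 = 0%N.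
    apply/eqP; rewrite -leqn0 leqNgt -has_count; apply/hasPn => [[a b]] ab /=.
    apply/negP => H; have : (a, b) \notin S.
      by move/orP: H => [/andP[/eqP ea hb]|/andP[/eqP eb ha]]; apply: nge; lia.
    by rewrite ab.
  rewrite -cats1 !big_cat !big_seq1 /= hk hy !eqxx leqnn /= add0n muln1.
  have EW : \sum_(x <- S) G x.1 x.2 = \sum_(x <- S) F x.1 x.2 +
      \sum_(0 <= k < m) (G (i - k)%N (j - k)%N - B k).
    rewrite [LHS](eq_bigr (fun x => F x.1 x.2 + (G x.1 x.2 - F x.1 x.2))); last first.
      by move=> x _; rewrite addrC subrK.
    rewrite big_split /=; congr (_ + _).
    have -> : \sum_(0 <= k < m) (G (i - k)%N (j - k)%N - B k) =
        \sum_(x <- [seq ((i - k)%N, (j - k)%N) | k <- iota 0 m]) (G x.1 x.2 - F x.1 x.2).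
      by rewrite big_map /index_iota subn0.
    apply: big_supp => //.
    - rewrite map_inj_in_uniq ?iota_uniq // => k1 k2; rewrite !mem_iota => hk1 hk2 [e1 e2].
      rewrite /m in hk1 hk2; lia.
    - move=> [a b] ab nr.
      case: (boolP (dg i.+1 j.+1 a b)) => hd.
        case/negP: nr; apply/mapP; exists (i - a)%N.
          by rewrite mem_iota /m; move: hd; rewrite /dg; lia.
        by congr pair; move: hd; rewrite /dg; lia.
      have ne : ~~ ((a == i.+1) && (b == j.+1)).
        by apply/negP => /andP[/eqP ea /eqP eb]; move: nSy; rewrite -ea -eb ab.
      by rewrite /= GE_o // subrr.
    - move=> [a b] /mapP[k]; rewrite mem_iota => hk' [-> ->] nS.
      by case/negP: nS; apply: rect; rewrite /m in hk'; lia.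
  have EH : \sum_(x <- S) ((T x.1 x.2 * (((i.+1 == x.1) && (x.2 <= j.+1)) ||
        ((j.+1 == x.2) && (x.1 <= i.+1))))%N)%:Z =
      \sum_(0 <= a < i) (T a.+1 j.+1)%:Z + \sum_(0 <= b < j) (T i.+1 b.+1)%:Z.
    transitivity (\sum_(x <- [seq (a.+1, j.+1) | a <- iota 0 i] ++ [seq (i.+1, b.+1) | b <- iota 0 j])
        ((T x.1 x.2 * (((i.+1 == x.1) && (x.2 <= j.+1)) || ((j.+1 == x.2) && (x.1 <= i.+1))))%N)%:Z).
      apply: big_supp => //.
      - rewrite cat_uniq !map_inj_uniq ?iota_uniq //=; last by move=> u v [].
          2: by move=> u v [].
        rewrite andbT; apply/hasPn => z /mapP[b hb ->]; apply/mapP => [[a ha [e _]]].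
        by move: ha; rewrite mem_iota; lia.
      - move=> [a b] ab nr /=.
        have [a0 b0] := h1 a b ab.
        case: (boolP (((i.+1 == a) && (b <= j.+1)) || ((j.+1 == b) && (a <= i.+1)))%N) => hp;
          last by rewrite muln0.
        exfalso; case/negP: nr; rewrite mem_cat; apply/orP.
        case/orP: hp => /andP[/eqP ea hb].
          right; apply/mapP; exists b.-1.
            rewrite mem_iota; case: (ltnP b j.+1) => hb'; first lia.
            have : (a, b) \notin S by apply: nge; lia.
            by rewrite ab.
          by congr pair; lia.
        left; apply/mapP; exists a.-1.
          rewrite mem_iota; case: (ltnP a i.+1) => ha'; first lia.
          have : (a, b) \notin S by apply: nge; lia.
          by rewrite ab.
        by congr pair; lia.
      - move=> [a b]; rewrite mem_cat => /orP[] /mapP[c]; rewrite mem_iota => hc [-> ->] nS.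
          by case/negP: nS; apply: rect; lia.
        by case/negP: nS; apply: row; lia.
    rewrite big_cat !big_map /index_iota !subn0; congr (_ + _).
      apply: eq_big_seq => a; rewrite mem_iota => ha /=.
      rewrite (_ : _ || _ = true) ?muln1 //; apply/orP; right; rewrite eqxx /=; lia.
    apply: eq_big_seq => b; rewrite mem_iota => hb /=.
    rewrite (_ : _ || _ = true) ?muln1 //; apply/orP; left; rewrite eqxx /=; lia.
  have ER : \sum_(x <- S) ((T x.1 x.2 * hookS (S ++ [:: (i.+1, j.+1)]) x.1 x.2)%N)%:Z =
      \sum_(x <- S) ((T x.1 x.2 * hookS S x.1 x.2)%N)%:Z +
      \sum_(x <- S) ((T x.1 x.2 * (((i.+1 == x.1) && (x.2 <= j.+1)) ||
        ((j.+1 == x.2) && (x.1 <= i.+1))))%N)%:Z.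
    by rewrite -big_split; apply: eq_bigr => x _; rewrite hk mulnDr PoszD.
  rewrite ER EH -W EW sumrB.
  have := Rs_col T i j; have := Rs_row T i j.
  move: DY; rewrite EG => DY'; move: D3; rewrite EB => D3'.
  slia.
Qed.

Local Close Scope ring_scope.

Lemma prefix_shp la s1 a b s2 : is_partition la -> s1 ++ (a, b) :: s2 = boxes la ->
  [/\ (0 < a)%N, (0 < b)%N & shp s1 a b].
Proof.
move=> hp E.
have pw := boxes_pairwise la.
have ub := pairwise_uniq lexlt_irr pw.
rewrite -E pairwise_cat /= in pw; case/and3P: pw => ar _ /andP[ay _].
have yb : (a, b) \in boxes la by rewrite -E mem_cat mem_head orbT.
have us1 : uniq s1 by move: ub; rewrite -E cat_uniq => /andP[].
have memS : forall c d, ((c, d) \in s1) = ((c, d) \in boxes la) && lexlt (c, d) (a, b).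
  move=> c d; apply/idP/andP.
    move=> cs; split; first by rewrite -E mem_cat cs.
    by apply: (allrelP ar); rewrite ?mem_head.
  case=> cb lt; move: cb; rewrite -E mem_cat in_cons => /or3P[//| /eqP e | cs2].
    by rewrite e lexlt_irr in lt.
  by have := allP ay _ cs2; move: lt; rewrite /lexlt /=; lia.
have srt : sorted geq la by case/andP: hp.
have mono : forall p p', (p' <= p)%N -> (p < size la)%N -> (nth 0 la p <= nth 0 la p')%N.
  move=> p p' h1 h2.
  have := @sorted_leq_nth _ geq _ _ 0%N la srt p' p.
  rewrite !inE /=; apply; try lia.
  - by move=> x y z /=; lia.
  - by move=> x /=; lia.
move: yb; rewrite mem_boxes => /and4P[a0 a1 b0 b1].
split => //; split.
- split => //; by rewrite memS lexlt_irr andbF.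
- by move=> c d; rewrite memS mem_boxes => /andP[/and4P[]]; lia.
- move=> c d c' d'; rewrite !memS !mem_boxes => /andP[/and4P[c0 c1 d0 d1] lt] h1 h2 h3 h4.
  have := mono c.-1 c'.-1; move: lt; rewrite /lexlt /=. 
  move=> lt hm; apply/andP; split; last lia.
  apply/and4P; split; try lia.
- move=> h; rewrite memS mem_boxes /lexlt /=.
  have hm : (nth 0 la a.-1 <= nth 0 la a.-2)%N by apply: mono; lia.
  apply/andP; split; last lia.
  apply/and4P; split; try lia.
- move=> h; rewrite memS mem_boxes /lexlt /=.
  apply/andP; split; last lia.
  apply/and4P; split; lia.
Qed.

Definition tf (T : nat -> nat -> nat) :=
  fun (st : seq (nat * nat) * (nat -> nat -> int)) (b : nat * nat) =>
            (rcons st.1 b, toggle_step st.1 st.2 b.1 b.2 (T b.1 b.2)).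

Lemma fold_inv la T : is_partition la -> forall s2 s1 F, s1 ++ s2 = boxes la ->
  Inv T s1 F -> Inv T (boxes la) (foldl (tf T) (s1, F) s2).2.
Proof.
move=> hp; elim=> [|[a b] s2 IH] s1 F E I.
  by rewrite cats0 in E; rewrite /= -E.
rewrite /=; apply: IH; first by rewrite cat_rcons.
have [a0 b0 sh] := prefix_shp hp E.
rewrite /= toggle_step_Fp; last by case: I.
clear E; case: a a0 sh => // a _; case: b b0 => // b _ sh.
exact: step_inv.
Qed.

Local Open Scope ring_scope.
Unset Implicit Arguments.

Theorem proposition3p1 (la : seq nat) (T : nat -> nat -> nat) :
  is_partition la ->
  weightZ la (toggle la T) =
  (\sum_(b <- boxes la) (T b.1 b.2 * hook la b.1 b.2)%N)%:Z.
Proof.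
move=> hp.
have init : Inv T [::] (fun _ _ => 0).
  by split => //; rewrite !big_nil.
have [_ _ _ _ W] := @fold_inv la T hp (boxes la) [::] _ erefl init.
rewrite /weightZ /toggle -/(tf T) W.
by rewrite (big_morph Posz PoszD (erefl (0 : int))).
Qed.
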